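(* Let $G=G(I,P;E)$ be a pinned graph and $\mathbf p$ a configuration in $\mathbb R^2$ such that the pinned framework $G(\mathbf p)$ is an independent 1-DOF linkage, and let $d$ be a driver of $G(\mathbf p)$ which is active. Then the driver replacement $\overline G(\mathbf p)$ is an isostatic pinned framework (and hence $\overline G$ is a pinned isostatic graph).
   Context: A pinned graph $G(I,P;E)$ has inner vertices $I$, pinned vertices $P$, and edges $E$ each with at least one endpoint in $I$. In the pinned framework $G(\mathbf p)$ the pinned vertices are fixed; a first-order motion assigns $\mathbf p'_i\in\mathbb R^2$ to inner vertices ($\mathbf p'_v=\mathbf 0$ for $v\in P$) with $(\mathbf p_i-\mathbf p_j)\cdot(\mathbf p'_i-\mathbf p'_j)=0$ for every edge $ij$; a self-stress is an assignment of scalars $\lambda_{ij}$ to edges with $\sum_{j:ij\in E}\lambda_{ij}(\mathbf p_i-\mathbf p_j)=\mathbf 0$ at each inner vertex. $G(\mathbf p)$ is independent if its only self-stress is zero; it is an independent 1-DOF linkage if it is independent and its space of first-order motions is one-dimensional (so $|E|=2|I|-1$); it is isostatic if it is independent and has only the zero first-order motion. A driver of a 1-DOF linkage is one of: (a) a piston on a pair of vertices $a,b$; (b) an angle driver on an angle $\angle abc$ formed by edges $ab,bc$ at an inner vertex $b$ of degree $\ge3$; (c) an angle driver on an angle $\angle abc$ formed by edges $ab,bc$ at an inner vertex $b$ of degree $2$; (d) an angle driver on an angle $\angle a p_i p_j$ where $p_i,p_j\in P$, $a\in I$ and $ap_i\in E$. The brace pair of the driver is $\{a,b\}$ in case (a),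 $\{a,c\}$ in cases (b),(c), and $\{a,p_j\}$ in case (d). The driver is active at $G(\mathbf p)$ if for a non-zero first-order motion $\mathbf p'$, the brace pair $\{x,y\}$ has non-zero strain: $(\mathbf p_x-\mathbf p_y)\cdot(\mathbf p'_x-\mathbf p'_y)\ne 0$ (equivalently, after appending the row of the brace pair to the rigidity matrix, the system $R\mathbf p'=(0,\dots,0,s_d)^T$ is solvable for every $s_d$). The driver replacement $\overline G$ is: in case (a), $G$ plus the bar $ab$; in case (b), $G$ plus the bar $ac$; in case (c), $G$ plus the bar $ac$ with the vertex $b$ and its two edges removed; in case (d), $G$ with $a$ made into an additional pinned vertex (edges between pinned vertices being discarded). $\overline G(\mathbf p)$ uses the same positions $\mathbf p$. A pinned isostatic graph is one satisfying $|E|=2|I|$ and, for every subgraph $G'(I',P';E')$ with $E'\neq\emptyset$: $|E'|\le 2|I'|$ if $|P'|\ge 2$, $|E'|\le2|I'|-1$ if $|P'|=1$, $|E'|\le 2|I'|-3$ if $P'=\emptyset$. *)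

(* Defs.v *)
(* The plane R^2 is 'rV[R]_2 over an arbitrary real field R
   (the statement is purely linear-algebraic). *)
From HB Require Import structures.
From mathcomp Require Import all_boot all_order all_algebra.
Set Implicit Arguments. Unset Strict Implicit. Unset Printing Implicit Defensive.
Import Order.TTheory GRing.Theory Num.Theory.
Local Open Scope ring_scope.

Section PinnedDefs.
Variables (R : realFieldType) (V : finType).

(* A pinned graph G(I,P;E) on the ambient vertex type V: vertices outside
   I :|: P are absent.  Edges are a symmetric irreflexive relation. *)
Record pgraph := PGraph { inner : {set V}; pinned : {set V}; edge : rel V }.

Definition pinned_graph (G : pgraph) : Prop :=
  [/\ [disjoint inner G & pinned G],
      (forall x y, edge G x y = edge G y x),
      (forall x, ~~ edge G x x),
      (forall x y, edge G x y ->
          (x \in inner G :|: pinned G) && (y \in inner G :|: pinned G)) &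
      (forall x y, edge G x y -> (x \in inner G) || (y \in inner G))].

Definition ecount (E : rel V) : nat := #|[set e : {set V} | [exists x, exists y, E x y && (e == [set x; y])]]|.

Definition deg (G : pgraph) (b : V) : nat := #|[set x | edge G b x]|.

Definition dotp (u v : 'rV[R]_2) : R := \sum_(k < 2) u 0 k * v 0 k.

Definition motion (G : pgraph) (p q : V -> 'rV[R]_2) : Prop :=
  (forall v, v \notin inner G -> q v = 0) /\
  (forall x y, edge G x y -> dotp (p x - p y) (q x - q y) = 0).

Definition self_stress (G : pgraph) (p : V -> 'rV[R]_2) (lam : V -> V -> R) : Prop :=
  [/\ (forall x y, lam x y = lam y x),
      (forall x y, ~~ edge G x y -> lam x y = 0) &
      (forall i, i \in inner G -> \sum_j lam i j *: (p i - p j) = 0)].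

Definition independent (G : pgraph) (p : V -> 'rV[R]_2) : Prop :=
  forall lam, self_stress G p lam -> forall x y, lam x y = 0.

Definition indep_1dof (G : pgraph) (p : V -> 'rV[R]_2) : Prop :=
  independent G p /\
  exists q0, [/\ motion G p q0, (exists v, q0 v != 0) &
    forall q, motion G p q -> exists c : R, forall v, q v = c *: q0 v].

Definition isostatic (G : pgraph) (p : V -> 'rV[R]_2) : Prop :=
  independent G p /\ forall q, motion G p q -> forall v, q v = 0.

Inductive driver :=
| Piston of V & V
| AngleDeg3 of V & V & V
| AngleDeg2 of V & V & V
| AnglePin of V & V & V.

Definition valid_driver (G : pgraph) (d : driver) : Prop :=
  match d with
  | Piston a b => [/\ a != b, a \in inner G :|: pinned G & b \in inner G :|: pinned G]
  | AngleDeg3 a b c =>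
      [/\ edge G a b, edge G b c, a != c, b \in inner G & 3 <= deg G b]%N
  | AngleDeg2 a b c =>
      [/\ edge G a b, edge G b c, a != c, b \in inner G & deg G b = 2]%N
  | AnglePin a pi pj =>
      [/\ pi \in pinned G, pj \in pinned G, pi != pj, a \in inner G & edge G a pi]
  end.

Definition brace (d : driver) : V * V :=
  match d with
  | Piston a b => (a, b)
  | AngleDeg3 a _ c => (a, c)
  | AngleDeg2 a _ c => (a, c)
  | AnglePin a _ pj => (a, pj)
  end.

Definition active (G : pgraph) (p : V -> 'rV[R]_2) (d : driver) : Prop :=
  let xy := brace d in
  exists q, [/\ motion G p q, (exists v, q v != 0) &
    dotp (p xy.1 - p xy.2) (q xy.1 - q xy.2) != 0].

Definition add_edge (E : rel V) (a c : V) : rel V :=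
  fun x y => E x y || ((x == a) && (y == c)) || ((x == c) && (y == a)).

Definition replacement (G : pgraph) (d : driver) : pgraph :=
  match d with
  | Piston a b => PGraph (inner G) (pinned G) (add_edge (edge G) a b)
  | AngleDeg3 a _ c => PGraph (inner G) (pinned G) (add_edge (edge G) a c)
  | AngleDeg2 a b c =>
      PGraph (inner G :\ b) (pinned G)
        (add_edge (fun x y => [&& edge G x y, x != b & y != b]) a c)
  | AnglePin a _ _ =>
      PGraph (inner G :\ a) (a |: pinned G)
        (fun x y => edge G x y && ~~ ((x \in a |: pinned G) && (y \in a |: pinned G)))
  end.

Definition subgraph (G : pgraph) (I' P' : {set V}) (E' : rel V) : Prop :=
  [/\ I' \subset inner G, P' \subset pinned G,
      (forall x y, E' x y -> edge G x y),
      (forall x y, E' x y = E' y x) &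
      (forall x y, E' x y ->
         [&& x \in I' :|: P', y \in I' :|: P' & (x \in I') || (y \in I')])].

Definition pinned_isostatic_graph (G : pgraph) : Prop :=
  ecount (edge G) = (2 * #|inner G|)%N /\
  forall I' P' E', subgraph G I' P' E' -> (exists x y, E' x y) ->
    [/\ (2 <= #|P'| -> ecount E' <= 2 * #|I'|)%N,
        (#|P'| = 1 -> ecount E' + 1 <= 2 * #|I'|)%N &
        (#|P'| = 0 -> ecount E' + 3 <= 2 * #|I'|)%N].

End PinnedDefs.

(* Main.v *)
Require Import Defs.
From HB Require Import structures.
From mathcomp Require Import all_boot all_order all_algebra.
Set Implicit Arguments. Unset Strict Implicit. Unset Printing Implicit Defensive.
Import Order.TTheory GRing.Theory Num.Theory.
Local Open Scope ring_scope.

Section Dot.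
Variable R : realFieldType.
Implicit Types u v w : 'rV[R]_2.

Definition i1 : 'I_2 := ord_max.

Lemma dotpE u v : dotp u v = u 0 0 * v 0 0 + u 0 i1 * v 0 i1.
Proof. rewrite /dotp !big_ord_recr big_ord0 /= (_ : widen_ord _ _ = 0); last exact: val_inj. by rewrite GRing.add0r. Qed.

Lemma rv2P u v : u 0 0 = v 0 0 -> u 0 i1 = v 0 i1 -> u = v.
Proof.
move=> h0 h1; apply/rowP=> k; case: k => [[|[|k]] hk] //.
  by rewrite (_ : Ordinal hk = 0) //; apply: val_inj.
by rewrite (_ : Ordinal hk = i1) //; apply: val_inj.
Qed.

Lemma dotpC u v : dotp u v = dotp v u.
Proof. by rewrite !dotpE mulrC [u 0 i1 * _]mulrC. Qed.
Lemma dotpDl u v w : dotp (u + v) w = dotp u w + dotp v w.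
Proof. by rewrite !dotpE !mxE !mulrDl addrACA. Qed.
Lemma dotpDr u v w : dotp w (u + v) = dotp w u + dotp w v.
Proof. by rewrite dotpC dotpDl !(dotpC w). Qed.
Lemma dotpZl a u v : dotp (a *: u) v = a * dotp u v.
Proof. by rewrite !dotpE !mxE mulrDr !mulrA. Qed.
Lemma dotpZr a u v : dotp v (a *: u) = a * dotp v u.
Proof. by rewrite dotpC dotpZl dotpC. Qed.
Lemma dotpNl u v : dotp (- u) v = - dotp u v.
Proof. by rewrite -scaleN1r dotpZl mulN1r. Qed.
Lemma dotpNr u v : dotp v (- u) = - dotp v u.
Proof. by rewrite dotpC dotpNl dotpC. Qed.
Lemma dotpBl u v w : dotp (u - v) w = dotp u w - dotp v w.
Proof. by rewrite dotpDl dotpNl. Qed.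
Lemma dotpBr u v w : dotp w (u - v) = dotp w u - dotp w v.
Proof. by rewrite dotpDr dotpNr. Qed.
Lemma dotp0l u : dotp 0 u = 0.
Proof. by rewrite dotpE !mxE !mul0r addr0. Qed.
Lemma dotp0r u : dotp u 0 = 0.
Proof. by rewrite dotpC dotp0l. Qed.
Lemma dotp_ge0 u : 0 <= dotp u u.
Proof. by rewrite dotpE addr_ge0 // -expr2 sqr_ge0. Qed.
Lemma dotp_eq0 u : dotp u u = 0 -> u = 0.
Proof.
rewrite dotpE => h.
have h0 : 0 <= u 0 0 * u 0 0 by rewrite -expr2 sqr_ge0.
have h1 : 0 <= u 0 i1 * u 0 i1 by rewrite -expr2 sqr_ge0.
move/eqP: h; rewrite paddr_eq0 // => /andP[/eqP a /eqP b].
apply: rv2P; rewrite mxE.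
  by apply/eqP; move/eqP: a; rewrite mulf_eq0 orbb.
by apply/eqP; move/eqP: b; rewrite mulf_eq0 orbb.
Qed.
Lemma dotp_sumr (I : finType) (F : I -> 'rV[R]_2) u :
  dotp u (\sum_i F i) = \sum_i dotp u (F i).
Proof.
elim/big_rec2: _ => [|i x y _ <-]; first by rewrite dotp0r.
by rewrite dotpDr.
Qed.
Lemma dotp_suml (I : finType) (F : I -> 'rV[R]_2) u :
  dotp (\sum_i F i) u = \sum_i dotp (F i) u.
Proof. by rewrite dotpC dotp_sumr; apply: eq_bigr => i _; rewrite dotpC. Qed.

Definition J u : 'rV[R]_2 := \row_(k < 2) (if k == 0 then - u 0 i1 else u 0 0).
Lemma J0 u : (J u) 0 0 = - u 0 i1. Proof. by rewrite mxE. Qed.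
Lemma J1 u : (J u) 0 i1 = u 0 0. Proof. by rewrite mxE. Qed.
Lemma dotpJ u : dotp u (J u) = 0.
Proof. by rewrite dotpE J0 J1 mulrN mulrC addNr. Qed.
Lemma JB u v : J (u - v) = J u - J v.
Proof. by apply: rv2P; rewrite !mxE /= ?opprD. Qed.
Lemma J_eq0 u : J u = 0 -> u = 0.
Proof.
move=> h; apply: rv2P; rewrite mxE.
  by move: (congr1 (fun w => w 0 i1) h); rewrite J1 mxE.
by move: (congr1 (fun w => w 0 0) h); rewrite J0 mxE => /eqP; rewrite oppr_eq0 => /eqP.
Qed.

Lemma perpJ u v : u != 0 -> dotp v u = 0 -> exists a, v = a *: J u.
Proof.
move=> nu; rewrite dotpE => h.
have [u0|u0] := eqVneq (u 0 0) 0.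
  have u1 : u 0 i1 != 0.
    apply: contraNneq nu => u1; apply/eqP; apply: rv2P; by rewrite ?u0 ?u1 mxE.
  move: h; rewrite u0 mulr0 add0r => /eqP; rewrite mulf_eq0 (negbTE u1) orbF => /eqP v1.
  exists (- (v 0 0 / u 0 i1)); apply: rv2P; rewrite !mxE /=.
    by rewrite mulrNN divfK.
  by rewrite u0 mulr0 v1.
exists (v 0 i1 / u 0 0); apply: rv2P; rewrite !mxE /=.
  apply: (mulfI u0); rewrite !mulrN mulrA [u 0 0 * (_ / _)]mulrC divfK //.
  by rewrite [u 0 0 * _]mulrC; apply/eqP; rewrite -addr_eq0 h.
by rewrite divfK.
Qed.

Lemma perp2 u v w : u != 0 -> v != 0 -> dotp v u = 0 -> dotp w u = 0 ->
  exists m, w = m *: v.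
Proof.
move=> nu nv hv hw; have [a ea] := perpJ nu hv; have [b eb] := perpJ nu hw.
have na : a != 0 by apply: contraNneq nv => a0; rewrite ea a0 scale0r.
by exists (b / a); rewrite ea eb scalerA divfK.
Qed.

End Dot.

Section LA.
Variables (R : realFieldType) (S T : finType).
Notation W := {ffun S -> 'rV[R]_2}.

Definition Bf (u w : W) : R := \sum_s dotp (u s) (w s).

Lemma dimW : dim W = (#|S| * 2)%N.
Proof. have h := dim_matrix R 1 2; rewrite [LHS]/dim /=; congr (_ * _)%N; exact: h. Qed.

Lemma dimF : dim {ffun T -> R^o} = #|T|.
Proof. by rewrite [LHS]/dim /= muln1. Qed.

Lemma Bf_eq0 u : Bf u u = 0 -> u = 0.
Proof.
move=> h; apply/ffunP => s; rewrite ffunE; apply: dotp_eq0.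
by apply: (psumr_eq0P _ h) => // i _; apply: dotp_ge0.
Qed.

Variable r : T -> W.

Definition gfun (w : W) : {ffun T -> R^o} := [ffun t => Bf (r t) w].

Lemma gfun_lin : linear gfun.
Proof.
move=> a u v; apply/ffunP => t; rewrite !ffunE /Bf.
rewrite scaler_sumr -big_split; apply: eq_bigr => s _ /=.
by rewrite !ffunE dotpDr dotpZr.
Qed.
HB.instance Definition _ := GRing.isLinear.Build _ _ _ _ gfun gfun_lin.

Definition hfun (l : {ffun T -> R^o}) : W := \sum_t l t *: r t.
Lemma hfun_lin : linear hfun.
Proof.
move=> a u v; rewrite /hfun scaler_sumr -big_split; apply: eq_bigr => t _ /=.
by rewrite !ffunE scalerDl scalerA.
Qed.
HB.instance Definition _ := GRing.isLinear.Build _ _ _ _ hfun hfun_lin.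

Definition cfun (l : {ffun T -> R^o}) : {ffun T -> R^o} := gfun (hfun l).
Lemma cfun_lin : linear cfun.
Proof. by move=> a u v; rewrite /cfun !linearP. Qed.
HB.instance Definition _ := GRing.isLinear.Build _ _ _ _ cfun cfun_lin.

Lemma Bf_hfun l w : Bf (hfun l) w = \sum_t l t * Bf (r t) w.
Proof.
rewrite /Bf /hfun; under eq_bigr => s _ do rewrite sum_ffunE dotp_suml.
rewrite exchange_big; apply: eq_bigr => t _; rewrite mulr_sumr.
by apply: eq_bigr => s _; rewrite ffunE dotpZl.
Qed.

Hypothesis rfree : forall lam : T -> R, \sum_t lam t *: r t = 0 -> forall t, lam t = 0.

Lemma LA : (\dim (lker (linfun gfun)) + #|T| = #|S| * 2)%N.
Proof.
have := limg_ker_dim (linfun gfun) fullv; rewrite capfv dimvf dimW => <-.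
congr (_ + _)%N; apply/eqP; rewrite eqn_leq; apply/andP; split; last first.
  by have := dimvS (subvf (linfun gfun @: fullv)); rewrite dimvf dimF.
have k0 : lker (linfun cfun) == 0%VS.
  apply/eqP/vspaceP => l; rewrite memv_ker memv0 lfunE /=.
  apply/idP/idP => [/eqP cl|/eqP ->]; last by rewrite linear0.
  have h0 : hfun l = 0.
    apply: Bf_eq0; rewrite Bf_hfun big1 // => t _.
    by move/ffunP: cl => /(_ t); rewrite !ffunE => ->; rewrite mulr0.
  apply/eqP/ffunP => t; rewrite ffunE; exact: rfree h0 t.
have k1 : (fullv :&: lker (linfun cfun) = 0)%VS by rewrite capfv; apply/eqP.
have e := limg_dim_eq k1.
have -> : #|T| = \dim (fullv : {vspace {ffun T -> R^o}}) by rewrite dimvf dimF.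
rewrite -e; apply: dimvS; apply/subvP => x /memv_imgP [l _ ->].
rewrite lfunE /= /cfun -(lfunE gfun); apply: memv_img; exact: memvf.
Qed.

End LA.

Section SumSig.
Variables (V : finType) (M : zmodType).
Lemma sum_sig (I : {set V}) (F : V -> M) :
  \sum_(v in I) F v = \sum_(s : {v : V | v \in I}) F (val s).
Proof.
rewrite (reindex_omap (val : {v : V | v \in I} -> V) insub) => [|v vi]; last by rewrite insubT.
apply: eq_bigl => s; by rewrite (valP s) valK eqxx.
Qed.

Lemma sum_pair x y (F : V -> M) : x != y ->
  \sum_(v in [set x; y]) F v = F x + F y.
Proof. by move=> nxy; rewrite big_setU1 ?big_set1 // in_set1. Qed.
End SumSig.

Definition edgeset (V : finType) (E : rel V) : {set {set V}} :=
  [set e : {set V} | [exists x, exists y, E x y && (e == [set x; y])]].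

Section Bridge.
Variables (R : realFieldType) (V : finType) (H : pgraph V) (p : V -> 'rV[R]_2).
Local Notation I := (inner H).
Local Notation E := (edge H).
Local Notation S := {v : V | v \in inner H}.
Local Notation ES := {e : {set V} | e \in edgeset (edge H)}.

Definition rr (e : ES) : {ffun S -> 'rV[R]_2} :=
  [ffun s => if val s \in val e then \sum_(w in val e) (p (val s) - p w) else 0].
Definition hat (q : V -> 'rV[R]_2) : {ffun S -> 'rV[R]_2} := [ffun s => q (val s)].
Definition ext (w : {ffun S -> 'rV[R]_2}) : V -> 'rV[R]_2 :=
  fun v => if insub v is Some s then w s else 0.

Hypothesis symE : forall x y, E x y = E y x.
Hypothesis irrE : forall x, ~~ E x x.

Lemma ecountE : ecount E = #|{: ES}|.
Proof. by rewrite card_sig /ecount; apply: eq_card. Qed.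

Lemma mem_edgeset_pair i j : i != j -> ([set i; j] \in edgeset E) = E i j.
Proof.
move=> nij; rewrite inE; apply/existsP/idP => [[x /existsP[y /andP[exy /eqP e]]]|eij].
  have ix : i \in [set x; y] by rewrite -e !inE eqxx.
  have jx : j \in [set x; y] by rewrite -e !inE eqxx orbT.
  move: ix jx nij; rewrite !inE => /orP[]/eqP -> /orP[]/eqP ->; rewrite ?eqxx //.
  by rewrite symE.
by exists i; apply/existsP; exists j; rewrite eij eqxx.
Qed.

Lemma pair_in_edge (e : {set V}) i j : e \in edgeset E -> i \in e -> j \in e -> i != j ->
  e = [set i; j].
Proof.
rewrite inE => /existsP[x /existsP[y /andP[exy /eqP ->]]].
rewrite !inE => /orP[]/eqP -> /orP[]/eqP ->; rewrite ?eqxx // => _.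
by rewrite setUC.
Qed.

Lemma sum_sel (M : zmodType) (F : ES -> M) (A : {set V}) :
  \sum_(e : ES) (if val e == A then F e else 0) =
  (if insub A is Some e0 then F e0 else 0).
Proof.
case: insubP => [e0 he0 <-|hn].
  rewrite (bigD1 e0) //= eqxx big1 ?addr0 // => e ne.
  by rewrite val_eqE (negbTE ne).
apply: big1 => e _; case: eqP => // ea.
by move: hn; rewrite -ea (valP e).
Qed.

Lemma hatK w : hat (ext w) = w.
Proof. by apply/ffunP => s; rewrite ffunE /ext valK. Qed.

Lemma ext_out w v : v \notin I -> ext w v = 0.
Proof. by move=> vi; rewrite /ext insubF //; apply/negbTE. Qed.

Lemma Bf_hat (e : ES) x y q : val e = [set x; y] -> x != y ->
  (forall v, v \notin I -> q v = 0) ->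
  Bf (rr e) (hat q) = dotp (p x - p y) (q x - q y).
Proof.
move=> ee nxy q0; rewrite /Bf.
pose G v := dotp (if v \in val e then \sum_(w in val e) (p v - p w) else 0) (q v).
transitivity (\sum_(s : S) G (val s)).
  by apply: congr_big => // s _; rewrite !ffunE.
transitivity (\sum_(v in I) G v); first by symmetry; apply: sum_sig.
rewrite (big_mkcond (fun v => v \in I)) /=.
transitivity (\sum_v G v).
  by apply: eq_bigr => v _; case: ifP => // vi; rewrite /G q0 ?vi // dotp0r.
transitivity (\sum_(v in val e) dotp (\sum_(w in val e) (p v - p w)) (q v)).
  by rewrite [RHS]big_mkcond /=; apply: eq_bigr => v _; rewrite /G; case: ifP => //; rewrite dotp0l.
rewrite ee !sum_pair // !subrr add0r addr0.
by rewrite dotpBr -[p y - p x]opprB dotpNl.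
Qed.

Lemma C1 : independent H p -> forall lam : ES -> R,
  \sum_e lam e *: rr e = 0 -> forall e, lam e = 0.
Proof.
move=> ind lam hsum.
pose lx (A : {set V}) := if insub A is Some e then lam e else 0.
pose L x y := if E x y then lx [set x; y] else 0.
have st : self_stress H p L.
  split.
  - by move=> x y; rewrite /L symE setUC.
  - by move=> x y nxy; rewrite /L (negbTE nxy).
  move=> i hi.
  move/ffunP: hsum => /(_ (exist _ i hi)).
  rewrite sum_ffunE ffunE /= => h0; rewrite -[RHS]h0.
  symmetry.
  transitivity (\sum_(e : ES) lam e *: (if i \in val e then \sum_(w in val e) (p i - p w) else 0)).
    by apply: congr_big => // e _; rewrite !ffunE.
  transitivity (\sum_(e : ES) \sum_j (if (i \in val e) && (j \in val e) then lam e *: (p i - p j) else 0)).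
    apply: eq_bigr => e _; case: ifP => ie /=; last by rewrite scaler0 big1.
    by rewrite scaler_sumr [LHS]big_mkcond /=; apply: eq_bigr => j _; case: ifP => //; rewrite ?ie.
  rewrite exchange_big /=; apply: eq_bigr => j _.
  have [<-|nij] := eqVneq i j.
    by rewrite big1 ?subrr ?scaler0 // => e _; rewrite scaler0; case: ifP.
  transitivity (\sum_(e : ES) (if val e == [set i; j] then lam e *: (p i - p j) else 0)).
    apply: congr_big => // e _; case: eqP => [->|ne].
      by rewrite !inE !eqxx orbT.
    case: ifP => // /andP[ie je]; case: ne; exact: pair_in_edge (valP e) ie je nij.
  rewrite sum_sel /L -mem_edgeset_pair //.
  case: insubP => [e0 he0 ee0|hn]; first by rewrite he0 /lx insubT /=; congr (lam _ *: _); apply: val_inj.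
  by rewrite (negbTE hn) scale0r.
move=> e; have := valP e; rewrite inE => /existsP[x /existsP[y /andP[exy /eqP ee]]].
have := ind L st x y; rewrite /L exy /lx -ee valK //.
Qed.

Definition gr := linfun (gfun rr).

Lemma C2 q : motion H p q -> hat q \in lker gr.
Proof.
move=> [q0 qe]; rewrite memv_ker lfunE /=; apply/eqP/ffunP => e; rewrite !ffunE.
have := valP e; rewrite inE => /existsP[x /existsP[y /andP[exy /eqP ee]]].
have nxy : x != y by apply: contraNneq (irrE x) => xy; rewrite {2}xy.
by rewrite (Bf_hat ee) // qe.
Qed.

Lemma C3 w : w \in lker gr -> motion H p (ext w).
Proof.
rewrite memv_ker lfunE /= => /eqP/ffunP hw; split; first exact: ext_out.
move=> x y exy.
have nxy : x != y by apply: contraNneq (irrE x) => xy; rewrite {2}xy.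
have mem : [set x; y] \in edgeset E by rewrite mem_edgeset_pair.
have := hw (exist _ [set x; y] mem); rewrite !ffunE.
by rewrite -{1}(hatK w) (@Bf_hat (exist _ [set x; y] mem) x y) //; apply: ext_out.
Qed.

Lemma count_indep : independent H p -> (\dim (lker gr) + ecount E = #|I| * 2)%N.
Proof.
move=> ind; rewrite ecountE.
have e := LA (C1 ind).
rewrite (_ : #|I| = #|{: S}|); last by rewrite card_sig; apply: eq_card.
exact: e.
Qed.

Lemma iso_count : isostatic H p -> ecount E = (2 * #|I|)%N.
Proof.
move=> [ind mot]; have := count_indep ind.
suff -> : \dim (lker gr) = 0%N by rewrite add0n mulnC.
apply/eqP; rewrite dimv_eq0; apply/eqP/vspaceP => w; rewrite memv0.
apply/idP/idP => [wk|/eqP ->]; last exact: mem0v.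
apply/eqP/ffunP => s; rewrite -(hatK w) !ffunE.
by rewrite (mot _ (C3 wk)).
Qed.

Lemma free_count (X : seq {ffun S -> 'rV[R]_2}) : independent H p ->
  free X -> {subset X <= lker gr} -> (size X + ecount E <= #|I| * 2)%N.
Proof.
move=> ind fX sX; rewrite -(count_indep ind) leq_add2r.
move/eqP: fX => <-; apply: dimvS; exact/span_subvP.
Qed.

End Bridge.

Section Gen.
Variables (R : realFieldType) (V : finType).

Lemma ZL (H : pgraph V) (p : V -> 'rV[R]_2) x y :
  (forall u v, edge H u v = edge H v u) -> independent H p ->
  edge H x y -> x != y -> p x != p y.
Proof.
move=> symE ind exy nxy; apply/negP => /eqP pe.
pose L u v : R := if ((u == x) && (v == y)) || ((u == y) && (v == x)) then 1 else 0.
have st : self_stress H p L.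
  split.
  - by move=> u v; rewrite /L orbC andbC [(_ == y) && _]andbC.
  - move=> u v; rewrite /L; case: ifP => // /orP[]/andP[/eqP-> /eqP->];
      by rewrite ?exy // symE exy.
  move=> i _; apply: big1 => j _; rewrite /L.
  by case: ifP => [/orP[]/andP[/eqP-> /eqP->]|_]; rewrite ?pe ?subrr ?scaler0 ?scale0r.
have := ind L st x y; rewrite /L !eqxx /= => /eqP; by rewrite oner_eq0.
Qed.

Definition rot (I : {set V}) (p : V -> 'rV[R]_2) (c : V) (v : V) : 'rV[R]_2 :=
  if v \in I then J (p v - p c) else 0.
Definition trans (I : {set V}) (t : 'rV[R]_2) (v : V) : 'rV[R]_2 :=
  if v \in I then t else 0.

Lemma rot_diff (I : {set V}) p c u v : c \notin I -> u \in c |: I -> v \in c |: I ->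
  rot I p c u - rot I p c v = J (p u - p v).
Proof.
move=> cI; rewrite /rot !inE => /orP[/eqP->|uI] /orP[/eqP->|vI];
  rewrite ?(negbTE cI) ?uI ?vI ?subrr ?subr0 ?sub0r.
- by apply: rv2P; rewrite !mxE oppr0.
- by rewrite -[p c - p v]opprB; apply: rv2P; rewrite !mxE.
- by [].
- by rewrite -JB opprB addrA subrK.
Qed.

Lemma GEN (H : pgraph V) (p : V -> 'rV[R]_2) :
  [disjoint inner H & pinned H] ->
  (forall x y, edge H x y = edge H y x) -> (forall x, ~~ edge H x x) ->
  isostatic H p -> pinned_isostatic_graph H.
Proof.
move=> dis symE irrE iso; split; first exact: (iso_count symE irrE iso).
move=> I' P' E' [sI sP sub symE' dom] [x0 [y0 e0]].
pose H' := PGraph I' P' E'.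
have symH' : forall x y, edge H' x y = edge H' y x by [].
have irrH' : forall x, ~~ edge H' x x.
  by move=> x; apply/negP => /sub; apply/negP.
have PnI : forall v, v \in P' -> v \notin I'.
  move=> v vP; apply/negP => vI.
  have := disjointFl dis (subsetP sP v vP); by rewrite (subsetP sI v vI).
have ind : independent H' p.
  move=> lam [ls lsup leq]; apply: (iso.1 lam); split => //.
  - by move=> x y nxy; apply: lsup; apply: contra nxy; exact: sub.
  move=> i hi; case: (boolP (i \in I')) => iI; first exact: leq.
  apply: big1 => j _.
  case: (boolP (E' i j)) => eij; last by rewrite lsup // scale0r.
  move: (dom _ _ eij); rewrite !inE (negbTE iI) /= => /andP[iP _].
  by move: (disjointFl dis (subsetP sP i iP)); rewrite hi.
have nxy0 : x0 != y0 by apply: contraNneq (irrH' x0) => xy; rewrite /= {2}xy.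
have pxy0 : p x0 != p y0 by apply: (ZL symH' ind).
split.
- move=> _; have := free_count (p := p) symH' (X := [::]) ind.
  by rewrite mulnC add0n; apply => //; rewrite /free /= span_nil dimv0.
- move=> /eqP/cards1P [z ez].
  have zI : z \notin I' by apply: PnI; rewrite ez set11.
  have mot : motion H' p (rot I' p z).
    split; first by move=> v /= vI; rewrite /rot (negbTE vI).
    move=> x y /= exy; move: (dom _ _ exy) => /and3P[xI yI _].
    rewrite rot_diff //; first exact: dotpJ.
      by move: xI; rewrite !inE ez inE orbC.
    by move: yI; rewrite !inE ez inE orbC.
  have fr : free [:: hat H' (rot I' p z)].
    rewrite seq1_free; apply/eqP => h0.
    wlog x0I : x0 y0 e0 nxy0 pxy0 / x0 \in I'.
      move=> W; move: (dom _ _ e0) => /and3P[_ _ /orP[]] hI; first exact: (W x0 y0).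
      by apply: (W y0 x0) => //; [rewrite symE' | rewrite eq_sym | rewrite eq_sym].
    have rx : rot I' p z x0 = 0.
      by move/ffunP: h0 => /(_ (exist _ x0 x0I)); rewrite !ffunE.
    have pxz : p x0 = p z.
      by move: rx; rewrite /rot x0I => /J_eq0/eqP; rewrite subr_eq0 => /eqP.
    move: (dom _ _ e0) => /and3P[_ + _]; rewrite inE => /orP[y0I|]; last first.
      by rewrite ez inE => /eqP yz; move: pxy0; rewrite pxz yz eqxx.
    have ry : rot I' p z y0 = 0.
      by move/ffunP: h0 => /(_ (exist _ y0 y0I)); rewrite !ffunE.
    move: ry; rewrite /rot y0I => /J_eq0/eqP; rewrite subr_eq0 => /eqP pyz.
    by move: pxy0; rewrite pxz pyz eqxx.
  have sb : {subset [:: hat H' (rot I' p z)] <= lker (gr H' p)}.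
    by move=> w; rewrite inE => /eqP ->; apply: (C2 irrH').
  have := free_count (p := p) symH' (X := [:: hat H' (rot I' p z)]) ind fr sb.
  by rewrite [size _]/= addnC mulnC.
- move=> /eqP; rewrite cards_eq0 => /eqP P0.
  have inI : forall x y, E' x y -> (x \in I') && (y \in I').
    move=> x y exy; move: (dom _ _ exy); rewrite P0 setU0 => /and3P[-> -> _] //.
  have /andP[x0I y0I] := inI _ _ e0.
  pose e1 : 'rV[R]_2 := \row_(k < 2) (if k == 0 then 1 else 0).
  pose e2 : 'rV[R]_2 := \row_(k < 2) (if k == 0 then 0 else 1).
  have mtr : forall t, motion H' p (trans I' t).
    move=> t; split; first by move=> v /= vI; rewrite /trans (negbTE vI).
    move=> x y /= /inI /andP[xI yI]; by rewrite /trans xI yI subrr dotp0r.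
  have mrot : motion H' p (rot I' p x0).
    split; first by move=> v /= vI; rewrite /rot (negbTE vI).
    move=> x y /= /inI /andP[xI yI].
    rewrite /rot xI yI -JB opprB addrA subrK; exact: dotpJ.
  pose X := [tuple hat H' (trans I' e1); hat H' (trans I' e2); hat H' (rot I' p x0)].
  have fr : free X.
    apply/freeP => k /ffunP hk.
    have hx := hk (exist _ x0 x0I); have hy := hk (exist _ y0 y0I).
    rewrite !sum_ffunE !big_ord_recr big_ord0 /= add0r !ffunE in hx.
    rewrite !sum_ffunE !big_ord_recr big_ord0 /= add0r !ffunE in hy.
    rewrite /= /trans /rot x0I subrr in hx.
    rewrite /= /trans /rot y0I in hy.
    move: hx hy; set ka := k (widen_ord _ (widen_ord _ _)); set kb := k (widen_ord _ ord_max); set kc := k ord_max => hx hy.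
    have hx0 := congr1 (fun w : 'rV[R]_2 => w 0 0) hx; have hx1 := congr1 (fun w : 'rV[R]_2 => w 0 i1) hx.
    rewrite !mxE /= ?mxE in hx0; rewrite !mxE /= ?mxE in hx1.
    have ka0 : ka = 0 by move: hx0; rewrite mulr1 !mulr0 oppr0 mulr0 !addr0.
    have kb0 : kb = 0 by move: hx1; rewrite mulr1 !mulr0 add0r addr0.
    have kc0 : kc = 0.
      move/eqP: hy; rewrite ka0 kb0 !scale0r !add0r scaler_eq0 => /orP[/eqP //|/eqP/J_eq0/eqP].
      by rewrite subr_eq0 eq_sym (negbTE pxy0).
    case=> [[|[|[|n]]] hi] //.
    - by rewrite -ka0 /ka; congr k; apply: val_inj.
    - by rewrite -kb0 /kb; congr k; apply: val_inj.
    - by rewrite -kc0 /kc; congr k; apply: val_inj.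
  have sb : {subset X <= lker (gr H' p)}.
    move=> w; rewrite !inE => /orP[/eqP->|/orP[/eqP->|/eqP->]]; exact: (C2 irrH').
  have := free_count (p := p) symH' (X := X) ind fr sb.
  by rewrite size_tuple addnC mulnC.
Qed.

End Gen.

Section Cases.
Variables (R : realFieldType) (V : finType).
Implicit Types (p q : V -> 'rV[R]_2) (lam : V -> V -> R).

Definition strain p q x y := dotp (p x - p y) (q x - q y).

Lemma strainC p q x y : strain p q x y = strain p q y x.
Proof. by rewrite /strain -[p x - p y]opprB dotpNl -[q x - q y]opprB dotpNr opprK. Qed.

Lemma strainZ p q c x y : strain p (fun v => c *: q v) x y = c * strain p q x y.
Proof. by rewrite /strain -scalerBr dotpZr. Qed.

Lemma VW p q lam : (forall x y, lam x y = lam y x) ->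
  \sum_i \sum_j lam i j * strain p q i j =
  \sum_i dotp (q i) (\sum_j lam i j *: (p i - p j)) +
  \sum_i dotp (q i) (\sum_j lam i j *: (p i - p j)).
Proof.
move=> ls.
have T0 : \sum_i \sum_j lam i j * dotp (p i - p j) (q i) =
   \sum_i dotp (q i) (\sum_j lam i j *: (p i - p j)).
  apply: eq_bigr => i _; rewrite dotp_sumr; apply: eq_bigr => j _.
  by rewrite dotpZr dotpC.
transitivity (\sum_i \sum_j lam i j * dotp (p i - p j) (q i) -
              \sum_i \sum_j lam i j * dotp (p i - p j) (q j)).
  rewrite -sumrB; apply: eq_bigr => i _; rewrite -sumrB; apply: eq_bigr => j _.
  by rewrite /strain dotpBr mulrBr.
rewrite [X in _ - X]exchange_big /=.
have E2 : \sum_j \sum_i lam i j * dotp (p i - p j) (q j) =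
  - \sum_i \sum_j lam i j * dotp (p i - p j) (q i).
  rewrite -sumrN; apply: eq_bigr => j _; rewrite -sumrN; apply: eq_bigr => i _.
  by rewrite ls -[p i - p j]opprB dotpNl mulrN.
by rewrite E2 opprK T0.
Qed.

Lemma VW0 p q lam : (forall x y, lam x y = lam y x) ->
  (forall i, dotp (q i) (\sum_j lam i j *: (p i - p j)) = 0) ->
  \sum_i \sum_j lam i j * strain p q i j = 0.
Proof. by move=> ls h; rewrite VW // big1 ?addr0. Qed.

Lemma sum2 (F : V -> V -> R) a c : a != c ->
  (forall i j, ~~ (((i == a) && (j == c)) || ((i == c) && (j == a))) -> F i j = 0) ->
  \sum_i \sum_j F i j = F a c + F c a.
Proof.
move=> nac h.
have Ga : \sum_j F a j = F a c.
  rewrite (bigD1 c) //= big1 ?addr0 // => j njc; apply: h.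
  by rewrite eqxx (negbTE njc) /= (negbTE nac).
have Gc : \sum_j F c j = F c a.
  rewrite (bigD1 a) //= big1 ?addr0 // => j nja; apply: h.
  by rewrite eqxx (negbTE nja) andbF eq_sym (negbTE nac).
rewrite (bigD1 a) //= Ga (bigD1 c) /=; last by rewrite eq_sym.
rewrite Gc big1 ?addr0 // => i /andP[nic nia]; apply: big1 => j _; apply: h.
by rewrite (negbTE nia) (negbTE nic).
Qed.

Lemma two_eq0 (x : R) : x + x = 0 -> x = 0.
Proof. by move/eqP; rewrite -mulr2n mulrn_eq0 /= => /eqP. Qed.


Lemma strain_span p q q0 c x y : (forall v, q v = c *: q0 v) ->
  strain p q x y = c * strain p q0 x y.
Proof. by move=> h; rewrite /strain !h -scalerBr dotpZr. Qed.

Lemma case_add (G : pgraph V) p a c :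
  pinned_graph G -> indep_1dof G p -> a != c ->
  (exists q, motion G p q /\ strain p q a c != 0) ->
  isostatic (PGraph (inner G) (pinned G) (add_edge (edge G) a c)) p.
Proof.
move=> [dis symE irrE _ _] [ind [q0 [m0 _ span]]] nac [q [mq sq]].
split.
- move=> lam [ls lsup leq].
  have hq : forall i, dotp (q i) (\sum_j lam i j *: (p i - p j)) = 0.
    move=> i; case: (boolP (i \in inner G)) => hi; first by rewrite leq // dotp0r.
    by rewrite mq.1 // dotp0l.
  have := VW0 ls hq.
  rewrite (sum2 nac) => [|i j nij]; last first.
    case: (boolP (edge G i j)) => e; first by rewrite /strain mq.2 // mulr0.
    rewrite lsup ?mul0r //=; by rewrite /add_edge (negbTE e).
  rewrite (ls c a) (strainC p q c a) => /two_eq0 /eqP; rewrite mulf_eq0 (negbTE sq) orbF => /eqP lac.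
  apply: ind; split => // x y nxy.
  case: (boolP (add_edge (edge G) a c x y)) => [|nxy']; last exact: lsup.
  rewrite /add_edge (negbTE nxy) /= => /orP[]/andP[/eqP-> /eqP->] //; by rewrite ls.
- move=> m [mz me].
  have mG : motion G p m by split => // x y exy; apply: me; rewrite /= /add_edge exy.
  have [cm hm] := span m mG; have [cq hq] := span q mq.
  have s0 : strain p m a c = 0 by apply: me; rewrite /= /add_edge !eqxx orbT.
  rewrite (strain_span _ _ _ hm) in s0.
  rewrite (strain_span _ _ _ hq) in sq.
  move/eqP: s0; rewrite mulf_eq0 => /orP[/eqP cm0|/eqP s00]; last by move: sq; rewrite s00 mulr0 eqxx.
  by move=> v; rewrite hm cm0 scale0r.
Qed.


Lemma dotpJC (u w : 'rV[R]_2) : dotp u (J w) = - dotp w (J u).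
Proof.
rewrite !dotpE !J0 !J1 opprD !mulrN opprK addrC; congr (_ + _).
  by rewrite mulrC.
by rewrite mulrC.
Qed.

Lemma nbr2 (G : pgraph V) a b c y : deg G b = 2%N -> edge G b a -> edge G b c -> a != c ->
  edge G b y -> (y == a) || (y == c).
Proof.
move=> dg ba bc nac eby; apply/negPn/negP => /norP[nya nyc].
have sub : y |: [set a; c] \subset [set x | edge G b x].
  apply/subsetP => x; rewrite !inE => /orP[/eqP->|/orP[]/eqP->] //.
have := subset_leq_card sub; rewrite -/(deg G b) dg cardsU1 cards2 nac !inE.
by rewrite (negbTE nya) (negbTE nyc).
Qed.

Lemma case_deg2 (G : pgraph V) p a b c :
  pinned_graph G -> indep_1dof G p ->
  edge G a b -> edge G b c -> a != c -> b \in inner G -> deg G b = 2%N ->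
  (exists q, motion G p q /\ strain p q a c != 0) ->
  isostatic (PGraph (inner G :\ b) (pinned G)
        (add_edge (fun x y => [&& edge G x y, x != b & y != b]) a c)) p.
Proof.
move=> [dis symE irrE _ _] [ind [q0 [m0 _ span]]] ab bc nac bI dg [q [mq sq]].
have nab : a != b by apply: contraNneq (irrE a) => e; rewrite {2}e.
have ncb : c != b by apply: contraNneq (irrE c) => e; rewrite {1}e.
have ba : edge G b a by rewrite symE.
have nb := nbr2 dg ba bc nac.
split.
- move=> lam [ls lsup leq].
  have lb : forall j, lam b j = 0.
    move=> j; apply: lsup; rewrite /= /add_edge eqxx /= andbF /=.
    by rewrite eq_sym (negbTE nab) [b == c]eq_sym (negbTE ncb).
  have hq : forall i, dotp (q i) (\sum_j lam i j *: (p i - p j)) = 0.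
    move=> i; have [->|nib] := eqVneq i b.
      by rewrite big1 ?dotp0r // => j _; rewrite lb scale0r.
    case: (boolP (i \in inner G)) => hi; first by rewrite leq ?dotp0r // !inE nib.
    by rewrite mq.1 // dotp0l.
  have := VW0 ls hq.
  rewrite (sum2 nac) => [|i j nij]; last first.
    case: (boolP (edge G i j)) => e; first by rewrite /strain mq.2 // mulr0.
    rewrite lsup ?mul0r //=; by rewrite /add_edge (negbTE e).
  rewrite (ls c a) (strainC p q c a) => /two_eq0 /eqP; rewrite mulf_eq0 (negbTE sq) orbF => /eqP lac.
  apply: ind; split => //.
  + move=> x y nxy.
    case: (boolP (add_edge (fun x y => [&& edge G x y, x != b & y != b]) a c x y)) => [|nxy']; last exact: lsup.
    rewrite /add_edge (negbTE nxy) /= => /orP[]/andP[/eqP-> /eqP->] //; by rewrite ls.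
  + move=> i hi; have [->|nib] := eqVneq i b.
      by apply: big1 => j _; rewrite lb scale0r.
    by apply: leq; rewrite !inE nib.
- move=> m [mz me].
  have mb : m b = 0 by apply: mz; rewrite !inE eqxx.
  pose u := p b - p a; pose w := p b - p c.
  have nu : u != 0 by rewrite subr_eq0 eq_sym; apply: (ZL symE ind ab nab).
  have D0 : dotp w (J u) != 0.
    apply/negP => /eqP D0.
    pose mm := fun v => if v == b then J u else 0.
    have mmG : motion G p mm.
      split; first by move=> v vI; rewrite /mm; case: eqP => // vb; move: vI; rewrite vb bI.
      have key : forall y, edge G b y -> strain p mm b y = 0.
        move=> y /nb /orP[]/eqP ->; rewrite /strain /mm eqxx.
          by rewrite (negbTE nab) subr0 dotpJ.
        by rewrite (negbTE ncb) subr0 D0.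
      move=> x y exy; rewrite -/(strain p mm x y).
      have [xb|nxb] := eqVneq x b; first by rewrite xb key // -xb.
      have [yb|nyb] := eqVneq y b.
        by rewrite strainC yb key // -yb symE.
      by rewrite /strain /mm (negbTE nxb) (negbTE nyb) subrr dotp0r.
    have [k hk] := span mm mmG; have [cq hq] := span q mq.
    have k0 : k != 0.
      apply: contraNneq nu => k0; apply/eqP; apply: J_eq0.
      by move: (hk b); rewrite /mm eqxx k0 scale0r.
    have qa : q0 a = 0 by move: (hk a); rewrite /mm (negbTE nab) => /esym/eqP; rewrite scaler_eq0 (negbTE k0) => /eqP.
    have qc : q0 c = 0 by move: (hk c); rewrite /mm (negbTE ncb) => /esym/eqP; rewrite scaler_eq0 (negbTE k0) => /eqP.
    by move: sq; rewrite /strain !hq qa qc scaler0 subrr dotp0r eqxx.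
  pose al := dotp u (m a); pose be := dotp w (m c); pose dd := dotp w (J u).
  pose x := (- (al / dd)) *: J w + (be / dd) *: J u.
  have hxa : dotp u x = al.
    by rewrite /x dotpDr !dotpZr dotpJ mulr0 addr0 dotpJC mulrN mulNr opprK divfK.
  have hxc : dotp w x = be.
    by rewrite /x dotpDr !dotpZr dotpJ mulr0 add0r divfK.
  pose m' := fun v => if v == b then x else m v.
  have m'G : motion G p m'.
    split.
      move=> v vI; rewrite /m'; case: eqP => [vb|_]; first by move: vI; rewrite vb bI.
      by apply: mz; rewrite !inE (negbTE vI) andbF.
    have key : forall y, edge G b y -> strain p m' b y = 0.
      move=> y /nb /orP[]/eqP ->; rewrite /strain /m' eqxx.
        by rewrite (negbTE nab) dotpBr hxa subrr.
      by rewrite (negbTE ncb) dotpBr hxc subrr.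
    move=> x' y exy; rewrite -/(strain p m' x' y).
    have [xb|nxb] := eqVneq x' b; first by rewrite xb key // -xb.
    have [yb|nyb] := eqVneq y b.
      by rewrite strainC yb key // -yb symE.
    rewrite /strain /m' (negbTE nxb) (negbTE nyb); apply: me.
    by rewrite /= /add_edge exy nxb nyb.
  have [k hk] := span m' m'G; have [cq hq] := span q mq.
  have s0 : strain p m' a c = 0.
    rewrite /strain /m' (negbTE nab) (negbTE ncb); apply: me.
    by rewrite /= /add_edge !eqxx orbT.
  rewrite (strain_span _ _ _ hk) in s0.
  rewrite (strain_span _ _ _ hq) in sq.
  move/eqP: s0; rewrite mulf_eq0 => /orP[/eqP k0|/eqP s00]; last by move: sq; rewrite s00 mulr0 eqxx.
  move=> v; have [->//|nvb] := eqVneq v b.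
  by move: (hk v); rewrite /m' (negbTE nvb) k0 scale0r.
Qed.


Lemma case_pin (G : pgraph V) p a pi pj :
  pinned_graph G -> indep_1dof G p ->
  pi \in pinned G -> pj \in pinned G -> a \in inner G -> edge G a pi ->
  (exists q, motion G p q /\ strain p q a pj != 0) ->
  isostatic (PGraph (inner G :\ a) (a |: pinned G)
     (fun x y => edge G x y && ~~ ((x \in a |: pinned G) && (y \in a |: pinned G)))) p.
Proof.
move=> [dis symE irrE _ _] [ind [q0 [m0 _ span]]] piP pjP aI api [q [mq sq]].
have Pn : forall v, v \in pinned G -> v \notin inner G.
  by move=> v vP; rewrite (disjointFl dis vP).
have qpj : q pj = 0 by apply: mq.1; apply: Pn.
have qpi : q pi = 0 by apply: mq.1; apply: Pn.
have qa : q a != 0 by apply: contraNneq sq => qa0; rewrite /strain qa0 qpj subrr dotp0r.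
have napi : a != pi by apply: contraTneq aI => ->; apply: Pn.
split.
- move=> lam [ls lsup leq].
  have hvw := VW p q ls.
  have l0 : \sum_i \sum_j lam i j * strain p q i j = 0.
    apply: big1 => i _; apply: big1 => j _.
    case: (boolP (edge G i j)) => e; first by rewrite /strain mq.2 // mulr0.
    by rewrite lsup ?mul0r //= (negbTE e).
  have hs : \sum_i dotp (q i) (\sum_j lam i j *: (p i - p j)) =
            dotp (q a) (\sum_j lam a j *: (p a - p j)).
    rewrite (bigD1 a) //= [X in _ + X]big1 ?addr0 // => i nia.
    case: (boolP (i \in inner G)) => hi; last by rewrite mq.1 // dotp0l.
    by rewrite leq ?dotp0r // !inE nia.
  rewrite l0 hs in hvw; move/esym/two_eq0: hvw => hF.
  have sapi : dotp (p a - p pi) (q a) = 0.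
    by have := mq.2 _ _ api; rewrite qpi subr0.
  have npa : p a - p pi != 0 by rewrite subr_eq0; apply: (ZL symE ind api napi).
  have hF' : dotp (\sum_j lam a j *: (p a - p j)) (q a) = 0 by rewrite dotpC.
  have [mu hmu] := perp2 qa npa sapi hF'.
  pose L x y := lam x y - (if ((x == a) && (y == pi)) || ((x == pi) && (y == a)) then mu else 0).
  have st : self_stress G p L.
    split.
    + by move=> x y; rewrite /L (ls x y); case: (x == a); case: (y == a); case: (x == pi); case: (y == pi).
    + move=> x y nxy; rewrite /L lsup /=; last by rewrite (negbTE nxy).
      case: ifP => [/orP[]/andP[/eqP ex /eqP ey]|]; last by rewrite subr0.
        by move: nxy; rewrite ex ey api.
      by move: nxy; rewrite ex ey symE api.
    + move=> i hi; have [->|nia] := eqVneq i a.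
        rewrite /L; under eq_bigr => j _ do rewrite scalerBl.
        rewrite sumrB hmu; apply/eqP; rewrite subr_eq0; apply/eqP.
        rewrite (bigD1 pi) //= [X in _ = _ + X]big1 ?addr0 ?eqxx //.
        by move=> j njpi; rewrite ?eqxx (negbTE njpi) (negbTE napi) /= scale0r.
      have nipi : i != pi by apply: contraTneq hi => ->; apply: Pn.
      rewrite -[RHS](leq i); last by rewrite !inE nia.
      by apply: eq_bigr => j _; rewrite /L (negbTE nia) (negbTE nipi) /= subr0.
  have L0 := ind L st.
  move=> x y; case: (boolP (((x == a) && (y == pi)) || ((x == pi) && (y == a)))) => hxy.
    apply: lsup => /=; apply/negP => /andP[_]; apply/negP; apply/negPn.
    by case/orP: hxy => /andP[/eqP-> /eqP->]; rewrite !inE eqxx ?piP ?orbT.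
  by move: (L0 x y); rewrite /L (negbTE hxy) subr0.
- move=> m [mz me].
  have mG : motion G p m.
    split; first by move=> v vI; apply: mz; rewrite !inE (negbTE vI) andbF.
    move=> x y exy.
    case: (boolP ((x \in a |: pinned G) && (y \in a |: pinned G))) => hb; last first.
      by apply: me; rewrite /= exy hb.
    have z : forall v, v \in a |: pinned G -> m v = 0.
      move=> v; rewrite !inE => /orP[/eqP->|vP]; apply: mz; rewrite !inE ?eqxx //.
      by rewrite (negbTE (Pn _ vP)) andbF.
    by case/andP: hb => /z -> /z ->; rewrite subrr dotp0r.
  have [k hk] := span m mG; have [cq hq] := span q mq.
  have ma : m a = 0 by apply: mz; rewrite !inE eqxx.
  have q0a : q0 a != 0 by apply: contraNneq qa => e; rewrite hq e scaler0.
  move: (hk a); rewrite ma => /esym/eqP; rewrite scaler_eq0 (negbTE q0a) orbF => /eqP k0.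
  by move=> v; rewrite hk k0 scale0r.
Qed.

End Cases.

Lemma add_edge_sym (V : finType) (E : rel V) a c : (forall x y, E x y = E y x) ->
  forall x y, add_edge E a c x y = add_edge E a c y x.
Proof.
move=> symE x y; rewrite /add_edge symE.
by case: (y == a); case: (y == c); case: (x == a); case: (x == c); rewrite /= ?orbT ?orbF.
Qed.

Lemma add_edge_irr (V : finType) (E : rel V) a c : (forall x, ~~ E x x) -> a != c ->
  forall x, ~~ add_edge E a c x x.
Proof.
move=> irrE nac x; rewrite /add_edge (negbTE (irrE x)) /=.
apply/negP => /orP[]/andP[/eqP xa /eqP xc]; by move: nac; rewrite -xa -xc eqxx.
Qed.

Theorem mainTheorem4 (R : realFieldType) (V : finType) (G : pgraph V)
    (p : V -> 'rV[R]_2) (d : driver V) :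
  pinned_graph G -> indep_1dof G p -> valid_driver G d -> active G p d ->
  isostatic (replacement G d) p /\ pinned_isostatic_graph (replacement G d).
Proof.
move=> pg ind vd act.
have [dis symE irrE _ _] := pg.
have act' : exists q, motion G p q /\ strain p q (brace d).1 (brace d).2 != 0.
  by case: act => q [h1 _ h3]; exists q.
case: d vd act act' => [a b|a b c|a b c|a pi pj] /= vd _ act'.
- case: vd => nab _ _.
  have iso := case_add pg ind nab act'.
  split => //; apply: GEN; last exact: iso; rewrite /=; first exact: dis.
    exact: add_edge_sym.
  exact: add_edge_irr.
- case: vd => ab bc nac bI _.
  have iso := case_add pg ind nac act'.
  split => //; apply: GEN; last exact: iso; rewrite /=; first exact: dis.
    exact: add_edge_sym.
  exact: add_edge_irr.
- case: vd => ab bc nac bI dg.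
  have iso := case_deg2 pg ind ab bc nac bI dg act'.
  split => //; apply: GEN; last exact: iso; rewrite /=.
  + by apply: disjointWl dis; apply: subD1set.
  + apply: add_edge_sym => x y; rewrite symE; case: (x != b); case: (y != b); by rewrite ?andbF ?andbT.
  + by apply: add_edge_irr => // x; rewrite (negbTE (irrE x)).
- case: vd => piP pjP _ aI api.
  have iso := case_pin pg ind piP pjP aI api act'.
  split => //; apply: GEN; last exact: iso; rewrite /=.
  + rewrite -setI_eq0; apply/eqP/setP => x; rewrite !inE.
    case: (boolP (x \in inner G)) => xI; last by rewrite andbF.
    case: eqP => [->|_] //=; by rewrite (disjointFr dis xI).
  + by move=> x y; rewrite symE [(y \in _) && _]andbC.
  + by move=> x; rewrite (negbTE (irrE x)).
Qed.
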